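(* Let $\mathbf A$ be a finite subdirectly irreducible cBCK-algebra which is not a chain, let $\mathcal K$ be a cover of $\mathcal V(\mathbf A)$ in the lattice of varieties of cBCK-algebras, and let $\mathbf B$ be a subdirectly irreducible member of $\mathcal K$. Then $|\mathrm{m}(\mathbf B)|\le|\mathrm{m}(\mathbf A)|+1$.
   Context: A BCK-algebra is an algebra $(A,\ominus,0)$ of type $(2,0)$ satisfying $((x\ominus y)\ominus(x\ominus z))\ominus(z\ominus y)=0$, $x\ominus 0=x$, $0\ominus x=0$, and ($x\ominus y=0$ and $y\ominus x=0$ imply $x=y$); it is ordered by $x\le y$ iff $x\ominus y=0$. A cBCK-algebra is a BCK-algebra satisfying $x\ominus(x\ominus y)=y\ominus(y\ominus x)$; cBCK-algebras form a variety. $\mathrm{m}(\mathbf B)$ denotes the set of maximal elements of $\mathbf B$. $\mathcal V(\mathbf A)$ is the variety generated by $\mathbf A$. A cover of a variety $\mathcal V$ is a variety $\mathcal K\supsetneq\mathcal V$ such that no variety lies strictly between $\mathcal V$ and $\mathcal K$. *)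

(* Defs.v *)
From mathcomp Require Import all_boot.
Set Implicit Arguments. Unset Strict Implicit. Unset Printing Implicit Defensive.

(* ---------- algebras of type (2,0): carrier T, binary [s] (= ⊖), constant [z] (= 0) ---------- *)

Section Alg.
Variables (T : Type) (s : T -> T -> T) (z : T).

Definition bck_le (x y : T) : Prop := s x y = z.

Definition is_BCK : Prop :=
  (forall x y w, s (s (s x y) (s x w)) (s w y) = z) /\
  (forall x, s x z = x) /\
  (forall x, s z x = z) /\
  (forall x y, s x y = z -> s y x = z -> x = y).

Definition is_cBCK : Prop :=
  is_BCK /\ (forall x y, s x (s x y) = s y (s y x)).

Definition is_chain : Prop := forall x y, bck_le x y \/ bck_le y x.

Definition is_maximal (x : T) : Prop := forall y, bck_le x y -> y = x.

Definition is_congruence (R : T -> T -> Prop) : Prop :=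
  let _ := z in
  (forall x, R x x) /\ (forall x y, R x y -> R y x) /\
  (forall x y w, R x y -> R y w -> R x w) /\
  (forall x x' y y', R x x' -> R y y' -> R (s x y) (s x' y')).

Definition is_identity_rel (R : T -> T -> Prop) : Prop :=
  let _ := (s, z) in forall x y, R x y -> x = y.

Definition subdirectly_irreducible : Prop :=
  let _ := z in
  exists mu, is_congruence mu /\ ~ is_identity_rel mu /\
    forall theta, is_congruence theta -> ~ is_identity_rel theta ->
      forall x y, mu x y -> theta x y.
End Alg.

Inductive term : Type :=
| tVar of nat
| tZero
| tSub of term & term.

Fixpoint eval (T : Type) (s : T -> T -> T) (z : T) (v : nat -> T) (t : term) : T :=
  match t with
  | tVar n => v n
  | tZero => z
  | tSub t1 t2 => s (eval s z v t1) (eval s z v t2)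
  end.

Definition identity := (term * term)%type.

Definition satisfies (T : Type) (s : T -> T -> T) (z : T) (e : identity) : Prop :=
  forall v : nat -> T, eval s z v e.1 = eval s z v e.2.

(* A set of identities, read as the subvariety of the variety of cBCK-algebras
   it axiomatizes (relative to cBCK). Every subvariety of cBCK arises this way. *)
Definition eqset := identity -> Prop.

Definition Mod (S : eqset) (T : Type) (s : T -> T -> T) (z : T) : Prop :=
  is_cBCK s z /\ forall e, S e -> satisfies s z e.

Definition var_incl (S1 S2 : eqset) : Prop :=
  forall (T : Type) (s : T -> T -> T) (z : T), Mod S1 s z -> Mod S2 s z.

Definition var_eq (S1 S2 : eqset) : Prop := var_incl S1 S2 /\ var_incl S2 S1.

(* equational theory of an algebra; Mod (Th A) = V(A), the smallest
   variety (equational class) containing A *)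
Definition Th (T : Type) (s : T -> T -> T) (z : T) : eqset := fun e => satisfies s z e.

Definition is_cover (SV SK : eqset) : Prop :=
  var_incl SV SK /\ ~ var_incl SK SV /\
  forall SW : eqset, var_incl SV SW -> var_incl SW SK -> var_eq SW SV \/ var_eq SW SK.

Definition maxb (A : finType) (s : A -> A -> A) (z : A) (x : A) : bool :=
  [forall y, (s x y == z) ==> (y == x)].

(* Main.v *)
Require Import Defs.
From mathcomp Require Import all_boot.
From Stdlib Require Import Classical ProofIrrelevance ClassicalEpsilon.

Set Implicit Arguments. Unset Strict Implicit. Unset Printing Implicit Defensive.

Definition tm (a b : term) := tSub b (tSub b a).
Definition pairs m := [seq p <- [seq (i, j) | i <- iota 0 m, j <- iota 0 m] | p.1 != p.2].
Definition Mt m := foldr (fun p acc => tm (tSub (tVar p.1) (tVar p.2)) acc)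
  (tSub (tVar 0) (tVar 1)) (pairs m).
Definition eps m : identity := (Mt m, tZero).

Section Gen.
Variables (T : Type) (s : T -> T -> T) (z : T).
Hypothesis H : is_cBCK s z.
Local Notation le x y := (s x y = z).

Lemma ax1 x y w : s (s (s x y) (s x w)) (s w y) = z. Proof. by case: H => [[h _] _]. Qed.
Lemma ax2 x : s x z = x. Proof. by case: H => [[_ [h _]] _]. Qed.
Lemma ax3 x : s z x = z. Proof. by case: H => [[_ [_ [h _]]] _]. Qed.
Lemma ax4 x y : s x y = z -> s y x = z -> x = y. Proof. by case: H => [[_ [_ [_ h]]] _]; apply: h. Qed.
Lemma comm x y : s x (s x y) = s y (s y x). Proof. by case: H => _ h; apply: h. Qed.

Lemma sxx x : s x x = z.
Proof. have := ax1 x z z. by rewrite !ax2. Qed.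
Lemma L_b x w : s (s x (s x w)) w = z.
Proof. have := ax1 x z w. by rewrite !ax2. Qed.
Lemma L_dec x y : s (s x y) x = z.
Proof. have := ax1 x y z. by rewrite ?ax2 ?ax3 ?ax2. Qed.
Lemma ltrans x y w : le x y -> le y w -> le x w.
Proof. move=> h1 h2; have := ax1 x w y. by rewrite h1 h2 !ax2. Qed.
Lemma anti2 x y w : le x y -> le (s w y) (s w x).
Proof. move=> h1; have := ax1 w y x. by rewrite h1 ax2. Qed.
Lemma mono1 x y w : le x y -> le (s x w) (s y w).
Proof. move=> h1; have := ax1 x w y. by rewrite h1 ax2. Qed.
Lemma lswap a b c : le (s a b) c -> le (s a c) b.
Proof. move=> h; apply: ltrans (L_b a b); exact: anti2. Qed.
Lemma lsub x y w : le (s (s x w) (s y w)) (s x y).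
Proof. apply: lswap; exact: ax1. Qed.
Lemma exch_le p q r : le (s (s p q) r) (s (s p r) q).
Proof. apply: lswap; apply: ltrans (lsub p (s p r) q) (L_b p r). Qed.
Lemma exch p q r : s (s p q) r = s (s p r) q.
Proof. apply: ax4; exact: exch_le. Qed.
Lemma dn e c : le c e -> s e (s e c) = c.
Proof. by move=> h; rewrite comm h ax2. Qed.
Lemma glb c u v : le c u -> le c v -> le c (s u (s u v)).
Proof.
move=> hu hv; have h := anti2 u (anti2 u hv).
by rewrite dn in h.
Qed.
Lemma le0 x : le x z -> x = z. Proof. by rewrite ax2. Qed.

Definition it a n x := iter n (fun t => s t a) x.
Lemma it_exch a n x y : it a n (s x y) = s (it a n x) y.
Proof. elim: n => //= n IH; by rewrite /it /= -/(it a n _) IH exch. Qed.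
Lemma it_mono a n x y : le x y -> le (it a n x) (it a n y).
Proof. move=> h; elim: n => //= n IH; exact: mono1. Qed.
Definition Ia a x := exists n, it a n x = z.
Lemma Ia_cl a x y : Ia a (s x y) -> Ia a y -> Ia a x.
Proof.
move=> [m Hm] [n Hn]; exists (n + m); rewrite /it iterD -/(it a m x) -/(it a n _).
have h1 : le (it a m x) y by rewrite -it_exch.
have := it_mono a n h1; rewrite Hn; exact: le0.
Qed.

Definition thI (I : T -> Prop) x y := I (s x y) /\ I (s y x).
Lemma thI_cong I : I z -> (forall x y, I (s x y) -> I y -> I x) -> is_congruence s z (thI I).
Proof.
move=> Iz Icl.
have Idn x y : le x y -> I y -> I x by move=> h hy; apply: (Icl x y) => //; rewrite h.
have Tr x y w : thI I x y -> thI I y w -> thI I x w.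
  move=> [a1 a2] [b1 b2]; split.
  - apply: (Icl _ (s x y)) => //; apply: Idn b1; exact: ax1.
  - apply: (Icl _ (s w y)) => //; apply: Idn a2; exact: ax1.
rewrite /is_congruence /=; split; [|split; [|split]].
- move=> x; rewrite /thI sxx; by split.
- by move=> x y [h1 h2]; split.
- exact: Tr.
- move=> x x' y y' [h1 h2] [k1 k2]; apply: (Tr _ (s x' y)); split.
  + apply: Idn h1; exact: lsub.
  + apply: Idn h2; exact: lsub.
  + apply: Idn k2; exact: ax1.
  + apply: Idn k1; exact: ax1.
Qed.

Lemma si_meet (Hsi : subdirectly_irreducible s z) a b :
  a <> z -> b <> z -> s b (s b a) <> z.
Proof.
move=> Ha Hb Hab; case: Hsi => mu [Hmu [Hnid Hleast]].
have orth w c t n : le w (s w c) -> it c n t = z -> le w t -> w = z.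
  move=> h1 h2 h3; have h4 : le w (it c n w).
    elim: n {h2} => [|n IH] /=; first exact: sxx.
    apply: ltrans h1 _; exact: mono1.
  have := ltrans h4 (it_mono c n h3); rewrite h2; exact: le0.
have key t : Ia a t -> Ia b t -> t = z.
  move=> [n Hn] [m Hm].
  have Hwa : le (s t (s t b)) (s (s t (s t b)) a).
    have := glb (ltrans (L_dec _ _) (L_b t b)) (L_b (s t (s t b)) a).
    rewrite Hab; exact: le0.
  have w0 := orth _ _ _ _ Hwa Hn (L_dec _ _).
  exact: (orth _ _ _ _ w0 Hm (sxx t)).
have [x [y [Hxy Hne]]] : exists x y, mu x y /\ x <> y.
  apply: NNPP => Hn; apply: Hnid; rewrite /is_identity_rel /= => x y Hxy; apply: NNPP => Hne; apply: Hn; by exists x, y.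
have nid c : c <> z -> ~ is_identity_rel s z (thI (Ia c)).
  move=> Hc Hid; rewrite /is_identity_rel /= in Hid; apply: Hc; apply: (Hid c z); split.
  - rewrite ax2; exists 1; exact: sxx.
  - rewrite ax3; by exists 0.
have Ic c : Ia c z by exists 0.
have [ha1 ha2] := Hleast _ (thI_cong (Ic a) (@Ia_cl a)) (nid a Ha) x y Hxy.
have [hb1 hb2] := Hleast _ (thI_cong (Ic b) (@Ia_cl b)) (nid b Hb) x y Hxy.
apply: Hne; apply: ax4; exact: key.
Qed.

Lemma prelin e x y u : le x e -> le y e -> le u (s x y) -> le u (s y x) -> u = z.
Proof.
move=> Hx Hy Hu1 Hu2.
pose mt := s (s e x) (s (s e x) (s e y)). pose j := s e mt.
have xj : le x j by rewrite -{1}(dn Hx); apply: anti2; exact: L_dec.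
have yj : le y j by rewrite -{1}(dn Hy); apply: anti2; exact: L_b.
have je : le j e by exact: L_dec.
have least c : le x c -> le y c -> le c e -> le j c.
  move=> hx hy hc; rewrite -(dn hc); apply: anti2; apply: glb; exact: anti2.
have uj1 : le u (s j y) by apply: ltrans Hu1 _; exact: mono1.
have uj2 : le u (s j x) by apply: ltrans Hu2 _; exact: mono1.
have yju : le y (s j u) by rewrite -{1}(dn yj); exact: anti2.
have xju : le x (s j u) by rewrite -{1}(dn xj); exact: anti2.
have jju : le j (s j u) by apply: least => //; apply: ltrans (L_dec _ _) je.
have uj : le u j by apply: ltrans Hu1 (ltrans (L_dec x y) xj).
by rewrite comm uj ax2 in jju.
Qed.

Lemma si_chain (Hsi : subdirectly_irreducible s z) e x y :
  le x e -> le y e -> le x y \/ le y x.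
Proof.
move=> Hx Hy; case: (classic (le x y)) => [h|h]; first by left.
case: (classic (le y x)) => [h'|h']; first by right.
exfalso; apply: (si_meet Hsi h h').
apply: (prelin Hx Hy); [exact: L_b | exact: L_dec].
Qed.

Lemma eval_M0 m v i j : i < m -> j < m -> i != j -> s (v i) (v j) = z ->
  eval s z v (Mt m) = z.
Proof.
move=> Hi Hj Hij Hz.
have : (i, j) \in pairs m.
  rewrite mem_filter /= Hij /=; apply/allpairsP; exists (i, j); by rewrite !mem_iota.
rewrite /Mt; elim: (pairs m) => //= p l IH; rewrite in_cons => /orP [/eqP <- | /IH ->].
- by rewrite /= Hz ax2 sxx.
- by rewrite ax3.
Qed.

Lemma eval_Mne (Hsi : subdirectly_irreducible s z) m v : 1 < m ->
  (forall i j, i < m -> j < m -> i != j -> s (v i) (v j) <> z) ->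
  eval s z v (Mt m) <> z.
Proof.
move=> Hm Hv.
have Hl : forall p, p \in pairs m -> s (v p.1) (v p.2) <> z.
  move=> [i j]; rewrite mem_filter => /andP [/= Hne /allpairsP [[i' j'] [/= Hi Hj [Ei Ej]]]]; subst i j.
  rewrite mem_iota in Hi; rewrite mem_iota in Hj.
  move: Hi Hj; rewrite /= !add0n => Hi Hj.
  exact: Hv.
rewrite /Mt; elim: (pairs m) Hl => /= [_|p l IH Hl]; first by apply: Hv => //; apply: ltnW.
apply: si_meet => //; first by apply: Hl; exact: mem_head.
apply: IH => q Hq; apply: Hl; by rewrite in_cons Hq orbT.
Qed.

Lemma pigeon (Hsi : subdirectly_irreducible s z) (Y : finType) (S : {set Y}) m
  (v : nat -> T) (e : Y -> T) (h : 'I_m -> Y) :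
  (forall i, h i \in S) -> (forall i : 'I_m, le (v i) (e (h i))) -> #|S| < m ->
  exists i j, [/\ i < m, j < m, i != j & s (v i) (v j) = z].
Proof.
move=> hS hle hc; apply: NNPP => Hn.
have hinj : injective h.
  move=> i1 i2 Heq; apply: NNPP => Hne.
  have Hne' : (i1 : nat) != i2 by apply/eqP => E; apply: Hne; apply: val_inj.
  have h2 : le (v i2) (e (h i1)) by rewrite Heq; exact: hle.
  case: (si_chain Hsi (hle i1) h2) => Hc; apply: Hn.
  + by exists i1, i2; split.
  + by exists i2, i1; split => //; rewrite eq_sym.
have sub : [set h i | i in [set: 'I_m]] \subset S.
  by apply/subsetP => y /imsetP [i _ ->]; exact: hS.
have := subset_leq_card sub; rewrite card_imset // cardsT card_ord => Hle.
by have := leq_ltn_trans Hle hc; rewrite ltnn.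
Qed.

Section Sub.
Variables (P : T -> Prop) (hPs : forall x y, P x -> P (s x y)) (hPz : P z).
Definition ST := {x : T | P x}.
Definition sS (a b : ST) : ST := exist P (s (proj1_sig a) (proj1_sig b)) (hPs (proj1_sig b) (proj2_sig a)).
Definition zS : ST := exist P z hPz.
Lemma ST_eq (a b : ST) : proj1_sig a = proj1_sig b -> a = b.
Proof. case: a => a pa; case: b => b pb /= E; subst b; f_equal; apply: proof_irrelevance. Qed.
Lemma eval_S v t : proj1_sig (eval sS zS v t) = eval s z (fun n => proj1_sig (v n)) t.
Proof. elim: t => //= t1 IH1 t2 IH2; by rewrite IH1 IH2. Qed.
Lemma sat_S e : satisfies s z e -> satisfies sS zS e.
Proof. move=> He v; apply: ST_eq; rewrite !eval_S; exact: He. Qed.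
Lemma cBCK_S : is_cBCK sS zS.
Proof.
split; [split; [|split; [|split]]|].
- move=> x y w; apply: ST_eq; exact: ax1.
- move=> x; apply: ST_eq; exact: ax2.
- move=> x; apply: ST_eq; exact: ax3.
- move=> x y h1 h2; apply: ST_eq; apply: ax4.
  + exact: (f_equal (@proj1_sig _ _) h1).
  + exact: (f_equal (@proj1_sig _ _) h2).
- move=> x y; apply: ST_eq; exact: comm.
Qed.
End Sub.
End Gen.

Section FinA.
Variables (A : finType) (sA : A -> A -> A) (zA : A).
Hypothesis hA : is_cBCK sA zA.
Definition upA (x : A) := [arg min_(y < x | sA x y == zA) #|[set w | sA y w == zA]|].
Lemma up_spec x : sA x (upA x) = zA /\ maxb sA zA (upA x).
Proof.
rewrite /upA; case: arg_minnP => [|y /eqP Hxy Hmin]; first by rewrite (sxx hA).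
split => //; apply/forallP => w; apply/implyP => /eqP Hyw.
case: (eqVneq w y) => // Hne; exfalso.
have := Hmin w; rewrite (ltrans hA Hxy Hyw) eqxx => /(_ isT).
apply/negP; rewrite -ltnNge; apply: proper_card; apply/properP; split.
- apply/subsetP => t; rewrite !inE => /eqP Hwt; apply/eqP; exact: (ltrans hA Hyw Hwt).
- exists y; rewrite !inE ?(sxx hA) //; apply/negP => /eqP Hwy; move/eqP: Hne; apply; exact: (ax4 hA Hwy Hyw).
Qed.
End FinA.

Theorem mainTheorem7
  (A : finType) (sA : A -> A -> A) (zA : A)
  (hA : is_cBCK sA zA) (hAsi : subdirectly_irreducible sA zA)
  (hAnc : ~ is_chain sA zA)
  (SK : eqset) (hK : is_cover (Th sA zA) SK)
  (B : Type) (sB : B -> B -> B) (zB : B)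
  (hB : Mod SK sB zB) (hBsi : subdirectly_irreducible sB zB) :
  forall (k : nat) (f : 'I_k -> B), injective f -> (forall i, is_maximal sB zB (f i)) ->
    k <= #|[set x : A | maxb sA zA x]|.+1.
Proof.
move=> k f finj fmax.
set n := #|[set x : A | maxb sA zA x]|.
rewrite leqNgt; apply/negP => Hk.
have n1 : 0 < n.
  rewrite /n card_gt0; apply/set0Pn; exists (upA sA zA zA); rewrite inE.
  exact: (up_spec hA zA).2.
have epsA m : n < m -> satisfies sA zA (eps m).
  move=> Hm v; change (eval sA zA v (Mt m) = zA).
  have h1 : forall i : 'I_m, upA sA zA (v i) \in [set x | maxb sA zA x].
    by move=> i; rewrite inE; exact: (up_spec hA _).2.
  have h2 : forall i : 'I_m, sA (v i) (id (upA sA zA (v i))) = zA.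
    by move=> i; exact: (up_spec hA _).1.
  have [i [j [Hi Hj Hij Hz]]] := @pigeon _ _ _ hA hAsi _ _ m v id _ h1 h2 Hm.
  exact: (eval_M0 hA Hi Hj Hij Hz).
have hBc := hB.1.
case: k f finj fmax Hk => [|k'] f finj fmax Hk; first by [].
pose v i := f (inord i).
have vdiff i j : i < k'.+1 -> j < k'.+1 -> i != j -> sB (v i) (v j) <> zB.
  move=> Hi Hj Hij E; have := fmax (inord i) (v j) E.
  move=> /finj /(congr1 (@nat_of_ord _)); rewrite !inordK // => Eji.
  by rewrite Eji eqxx in Hij.
have Bfail : ~ satisfies sB zB (eps n.+2).
  move=> Hs; have : eval sB zB v (Mt n.+2) = zB := Hs v; apply: (eval_Mne hBc hBsi) => //.
  move=> i j Hi Hj Hij; apply: vdiff => //; [exact: (leq_trans Hi Hk) | exact: (leq_trans Hj Hk)].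
pose SW : eqset := fun e => SK e \/ e = eps n.+2.
case: hK => hK1 [hK2 hK3].
have i1 : var_incl (Th sA zA) SW.
  move=> D sD zD [HD1 HD2]; have HK := hK1 D sD zD (conj HD1 HD2).
  split; first done.
  move=> e [He | ->]; first exact: HK.2 e He.
  apply: HD2; exact: epsA.
have i2 : var_incl SW SK.
  move=> D sD zD [HD1 HD2]; split => // e He; apply: HD2; by left.
case: (hK3 SW i1 i2) => [[Hc _] | [_ Hc]]; last first.
  have := Hc B sB zB hB; case=> _ Hs; apply: Bfail; apply: Hs; by right.
pose P x := exists i, i < n.+1 /\ sB x (v i) = zB.
have hPs x y : P x -> P (sB x y).
  move=> [i [Hi Hx]]; exists i; split => //; exact: (ltrans hBc (L_dec hBc _ _) Hx).
have hPz : P zB by exists 0; split => //; exact: (ax3 hBc _).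
have HC : Mod SW (sS hPs) (zS hPz).
  split; first exact: (@cBCK_S _ _ _ hBc P hPs hPz).
  move=> e [He | ->]; first by apply: sat_S; exact: hB.2 e He.
  move=> w; change (eval (sS hPs) (zS hPz) w (Mt n.+2) = zS hPz); apply: ST_eq; rewrite eval_S.
  change (eval sB zB (fun k => proj1_sig (w k)) (Mt n.+2) = zB).
  have hex : forall i : 'I_n.+2, exists c : 'I_n.+1, sB (proj1_sig (w i)) (v c) = zB.
    move=> i; case: (proj2_sig (w i)) => c [Hc' Hle]; by exists (Ordinal Hc').
  pose h i := proj1_sig (constructive_indefinite_description _ (hex i)).
  have Hh (i : 'I_n.+2) : sB (proj1_sig (w i)) (v (h i)) = zB :=
    proj2_sig (constructive_indefinite_description _ (hex i)).
  have hc : #|[set: 'I_n.+1]| < n.+2 by rewrite cardsT card_ord.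
  have [i [j [Hi Hj Hij Hz]]] := @pigeon _ _ _ hBc hBsi _ [set: 'I_n.+1] n.+2
     (fun i => proj1_sig (w i)) (fun c : 'I_n.+1 => v c) h
     (fun i => in_setT _) Hh hc.
  exact: (eval_M0 hBc Hi Hj Hij Hz).
have hw i : P (v (minn i n)).
  exists (minn i n); split; [by rewrite ltnS geq_minr | exact: (sxx hBc _)].
pose w i := exist P (v (minn i n)) (hw i).
have := (Hc _ _ _ HC).2 (eps n.+1) (epsA n.+1 (ltnSn n)) w.
change (eval (sS hPs) (zS hPz) w (Mt n.+1) = zS hPz -> False).
move=> /(f_equal (@proj1_sig _ _)); rewrite eval_S.
change (eval sB zB (fun k => proj1_sig (w k)) (Mt n.+1) = zB -> False).
apply: (eval_Mne hBc hBsi) => // i j Hi Hj Hij.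
have Ei : minn i n = i by apply/minn_idPl; rewrite -ltnS.
have Ej : minn j n = j by apply/minn_idPl; rewrite -ltnS.
rewrite /w /= Ei Ej.
have Hk' : n.+1 <= k'.+1 by apply: ltnW.
apply: vdiff => //; [exact: (leq_trans Hi Hk') | exact: (leq_trans Hj Hk')].
Qed.
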